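(* For every real number $r\ge 1$, the function $f_r:[0,1]\to\mathbb{R}$ defined by $$f_r(x):=\sum_{m\in\mathbb{Z}}\Big|\frac{\sin(\pi(x+m))}{\pi(x+m)}\Big|^{2r},\qquad x\in[0,1],$$ attains its global minimum on $[0,1]$ at $x=\tfrac12$.
   Context: The summands have removable singularities (at $x+m=0$); each is understood to be its unique continuous extension (so the summand equals $1$ when $x+m=0$). *)

(* Defs.v *)
From Stdlib Require Import Reals.
From Coquelicot Require Import Coquelicot.
Open Scope R_scope.

Definition sinc (t : R) : R :=
  if Req_EM_T t 0 then 1 else sin t / t.

(* a ^ y for a >= 0 and y > 0, with the convention 0 ^ y = 0
   (Stdlib's Rpower 0 y = 1, so we guard the zero case). *)
Definition rpow (a y : R) : R :=
  if Req_EM_T a 0 then 0 else Rpower a y.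

Definition term (r t : R) : R := rpow (Rabs (sinc (PI * t))) (2 * r).

(* f_r(x) = sum_{m in Z} term r (x + m), written as the sum over m >= 0
   plus the sum over m <= -1 (all terms nonnegative, series converge for r >= 1). *)
Definition sinc_sum (r x : R) : R :=
  Series (fun n : nat => term r (x + INR n))
  + Series (fun n : nat => term r (x - INR (S n))).

(* Main.v *)
Require Import Defs.
From Stdlib Require Import Reals Lra Lia Psatz FunctionalExtensionality.
From Coquelicot Require Import Coquelicot.
Open Scope R_scope.

Lemma sa3 a : sin_approx a 3 = a - a^3/6 + a^5/120 - a^7/5040.
Proof. unfold sin_approx, sin_term. simpl sum_f_R0.
 replace (INR (Factorial.fact (2*0+1))) with 1 by (simpl; lra).
 replace (INR (Factorial.fact (2*1+1))) with 6 by (simpl; lra).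
 replace (INR (Factorial.fact (2*2+1))) with 120 by (simpl; lra).
 replace (INR (Factorial.fact (2*3+1))) with 5040 by (compute; lra).
 simpl. field. Qed.

Lemma sa2 a : sin_approx a 2 = a - a^3/6 + a^5/120.
Proof. unfold sin_approx, sin_term. simpl sum_f_R0.
 replace (INR (Factorial.fact (2*0+1))) with 1 by (simpl; lra).
 replace (INR (Factorial.fact (2*1+1))) with 6 by (simpl; lra).
 replace (INR (Factorial.fact (2*2+1))) with 120 by (simpl; lra).
 simpl. field. Qed.

Lemma PI_gt3 : 3 < PI.
Proof. pose proof PI2_3_2. lra. Qed.

Lemma sin_le_id x : 0 <= x -> sin x <= x.
Proof. intros Hx. destruct (Rle_lt_dec x 1) as [H|H].
 - assert (H4 : x <= 4) by lra. pose proof (pre_sin_bound x 0 Hx H4) as [_ H2].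
   replace (2 * (0+1))%nat with 2%nat in H2 by lia. rewrite sa2 in H2.
   assert (Hxx : x*x <= 1) by nra. assert (H3 := pow_le x 3 Hx).
   assert (x^5/120 <= x^3/6). { assert (x^5 <= x^3). { replace (x^5) with (x^3*(x*x)) by ring.
   rewrite <- (Rmult_1_r (x^3)) at 2. apply Rmult_le_compat_l; auto. } lra. } lra.
 - pose proof (SIN_bound x). lra.
Qed.

Lemma sin_ge_negid x : 0 <= x -> - x <= sin x.
Proof. intros Hx. destruct (Rle_lt_dec x PI) as [H|H].
 - pose proof (sin_ge_0 x Hx H). lra.
 - pose proof (SIN_bound x). pose proof PI_gt3. lra.
Qed.

Lemma abs_sin_le x : Rabs (sin x) <= Rabs x.
Proof. destruct (Rle_lt_dec 0 x) as [H|H].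
 - rewrite (Rabs_pos_eq x H). apply Rabs_le. split.
   pose proof (sin_ge_negid x H). lra. apply sin_le_id; auto.
 - rewrite (Rabs_left x) by lra. apply Rabs_le. pose proof (sin_le_id (-x)) as A.
   pose proof (sin_ge_negid (-x)) as B. assert (Hn : 0 <= -x) by lra.
   specialize (A Hn). specialize (B Hn). rewrite sin_neg in A, B. split; lra.
Qed.

Lemma sinc_0 : sinc 0 = 1.
Proof. unfold sinc. destruct (Req_EM_T 0 0); [reflexivity| congruence]. Qed.

Lemma sinc_nz t : t <> 0 -> sinc t = sin t / t.
Proof. intros H. unfold sinc. destruct (Req_EM_T t 0); [congruence | reflexivity]. Qed.

Lemma sinc_opp t : sinc (- t) = sinc t.
Proof. destruct (Req_EM_T t 0) as [->|H].
 - rewrite Ropp_0; reflexivity.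
 - rewrite !sinc_nz by lra. rewrite sin_neg. field. auto.
Qed.

Lemma abs_sinc_le1 t : Rabs (sinc t) <= 1.
Proof. destruct (Req_EM_T t 0) as [->|H].
 - rewrite sinc_0, Rabs_R1. lra.
 - rewrite sinc_nz by auto. unfold Rdiv. rewrite Rabs_mult, Rabs_inv.
   pose proof (abs_sin_le t). pose proof (Rabs_pos_lt t H).
   apply (Rmult_le_reg_r (Rabs t)); auto. rewrite Rmult_assoc, Rinv_l by lra. lra.
Qed.

Definition g (t : R) : R := sinc (PI * t) * sinc (PI * t).

Lemma g_nonneg t : 0 <= g t.
Proof. unfold g. nra. Qed.

Lemma g_le1 t : g t <= 1.
Proof. unfold g. pose proof (abs_sinc_le1 (PI*t)).
 rewrite <- (Rabs_pos_eq (_ * _)) by nra. rewrite Rabs_mult.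
 pose proof (Rabs_pos (sinc (PI*t))). nra. Qed.

Lemma g_0 : g 0 = 1.
Proof. unfold g. rewrite Rmult_0_r, sinc_0. ring. Qed.

Lemma g_nz t : t <> 0 -> g t = sin (PI * t) * sin (PI * t) / ((PI * t) * (PI * t)).
Proof. intros H. assert (PI * t <> 0) by (apply Rmult_integral_contrapositive; split; [pose proof PI_RGT_0; lra | auto]).
 unfold g. rewrite sinc_nz by auto. field. split; [auto | pose proof PI_RGT_0; lra]. Qed.

Lemma g_opp t : g (- t) = g t.
Proof. unfold g. replace (PI * - t) with (- (PI * t)) by ring. rewrite sinc_opp. reflexivity. Qed.

Lemma g_bound2 t : g t * (1 + t * t) <= 2.
Proof. destruct (Req_EM_T t 0) as [->|H].
 - rewrite g_0. lra.
 - pose proof PI_gt3. assert (g t * (t*t) <= 1).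
   { rewrite g_nz by auto. replace (sin (PI * t) * sin (PI * t) / (PI * t * (PI * t)) * (t * t))
       with (sin (PI * t) * sin (PI * t) / (PI * PI)) by (field; split; lra).
     pose proof (SIN_bound (PI*t)). apply (Rmult_le_reg_r (PI*PI)). nra.
     unfold Rdiv. rewrite Rmult_assoc, Rinv_l by nra. nra. }
   pose proof (g_le1 t). lra.
Qed.

Lemma sin_shift x n : sin (x + INR n * PI) * sin (x + INR n * PI) = sin x * sin x.
Proof. induction n. - simpl. rewrite Rmult_0_l, Rplus_0_r. reflexivity.
 - rewrite S_INR. replace (x + (INR n + 1) * PI) with ((x + INR n * PI) + PI) by ring.
   rewrite neg_sin. rewrite <- IHn. ring. Qed.

Lemma cos_shift x n : cos (x + INR n * PI) * cos (x + INR n * PI) = cos x * cos x.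
Proof. induction n. - simpl. rewrite Rmult_0_l, Rplus_0_r. reflexivity.
 - rewrite S_INR. replace (x + (INR n + 1) * PI) with ((x + INR n * PI) + PI) by ring.
   rewrite neg_cos. rewrite <- IHn. ring. Qed.

Lemma sin_shift' x n : sin (x - INR n * PI) * sin (x - INR n * PI) = sin x * sin x.
Proof. rewrite <- (sin_shift (x - INR n * PI) n). f_equal; f_equal; ring. Qed.

Lemma cos_shift' x n : cos (x - INR n * PI) * cos (x - INR n * PI) = cos x * cos x.
Proof. rewrite <- (cos_shift (x - INR n * PI) n). f_equal; f_equal; ring. Qed.

Lemma g_INR n : (1 <= n)%nat -> g (INR n) = 0.
Proof. intros Hn. assert (INR n <> 0) by (apply not_0_INR; lia).
 rewrite g_nz by auto. pose proof (sin_shift 0 n). rewrite sin_0, Rplus_0_l in H0.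
 replace (PI * INR n) with (INR n * PI) by ring. rewrite H0. unfold Rdiv. ring. Qed.

Lemma g_mINR n : (1 <= n)%nat -> g (- INR n) = 0.
Proof. intros. rewrite g_opp. apply g_INR; auto. Qed.

Lemma sinc_double u : sinc (PI * (2 * u)) = cos (PI * u) * sinc (PI * u).
Proof. destruct (Req_EM_T u 0) as [->|H].
 - rewrite !Rmult_0_r, sinc_0, cos_0. ring.
 - pose proof PI_gt3. rewrite (sinc_nz (PI * (2*u))), (sinc_nz (PI*u)).
   + replace (PI * (2*u)) with (2 * (PI * u)) by ring. rewrite sin_2a. field. split; lra.
   + intro. apply H. nra.
   + intro. apply H. nra.
Qed.

Lemma g_double u : g (2 * u) = cos (PI * u) * cos (PI * u) * g u.
Proof. unfold g. rewrite sinc_double. ring. Qed.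


Definition M (n : nat) : R := 50 / (1 + INR n * INR n).

Lemma sq_abs t : t * t = Rabs t * Rabs t.
Proof. pose proof (Rsqr_abs t). unfold Rsqr in H. auto. Qed.

Lemma g_M t n : INR n <= Rabs t + 2 -> g t <= M n.
Proof. intros H. pose proof (g_bound2 t). pose proof (g_nonneg t). pose proof (g_le1 t).
 pose proof (pos_INR n). unfold M. assert (Hp : 0 < 1 + INR n * INR n) by nra.
 apply (Rmult_le_reg_r (1 + INR n * INR n)); auto. unfold Rdiv. rewrite Rmult_assoc, Rinv_l by lra.
 destruct (Rle_lt_dec (INR n) 2).
 - nra.
 - assert (Ht : (INR n - 2) * (INR n - 2) <= t * t).
   { rewrite (sq_abs t). apply Rmult_le_compat; lra. }
   assert (1 + INR n * INR n <= 25 * (1 + t * t)) by nra.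
   nra.
Qed.

Lemma M_pos n : 0 <= M n.
Proof. unfold M. pose proof (pos_INR n). apply Rle_mult_inv_pos; nra. Qed.

Lemma sum_tele' N : sum_f_R0 (fun n => / (INR n + 1) - / (INR n + 2)) N = 1 - / (INR N + 2).
Proof. induction N.
 - simpl. field.
 - rewrite tech5, IHN. rewrite !S_INR. pose proof (pos_INR N). field. lra.
Qed.

Lemma is_series_tele : is_series (fun n => / (INR n + 1) - / (INR n + 2)) 1.
Proof.
 assert (H : is_lim_seq (fun N => 1 - / (INR N + 2)) 1).
 { assert (H0 : is_lim_seq (fun N => / (INR N + 2)) 0).
   2: { pose proof (is_lim_seq_minus' _ _ 1 0 (is_lim_seq_const 1) H0) as H1. rewrite Rminus_0_r in H1. exact H1. }
   assert (is_lim_seq (fun N => INR N + 2) p_infty).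
   { eapply is_lim_seq_ext with (u := fun N => INR (N + 2)).
     intros. rewrite plus_INR. simpl. ring.
     apply (is_lim_seq_incr_n INR 2 p_infty). apply is_lim_seq_INR. }
   apply is_lim_seq_inv in H. simpl in H. exact H. discriminate. }
 assert (E : forall N, 1 - / (INR N + 2) = sum_n (fun n => / (INR n + 1) - / (INR n + 2)) N).
 { intros N. rewrite sum_n_Reals. rewrite sum_tele'. reflexivity. }
 apply (is_lim_seq_ext _ _ _ E) in H. exact H.
Qed.

Lemma ex_series_M : ex_series M.
Proof.
 apply (ex_series_le M (fun n => 200 * (/ (INR n + 1) - / (INR n + 2)))).
 - intros n. change (norm (M n)) with (Rabs (M n)). rewrite Rabs_pos_eq by apply M_pos.
   unfold M. pose proof (pos_INR n).
   replace (/ (INR n + 1) - / (INR n + 2)) with (/ ((INR n + 1) * (INR n + 2))) by (field; lra).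
   set (D := (INR n + 1) * (INR n + 2)). set (E := 1 + INR n * INR n).
   assert (0 < D) by (unfold D; nra). assert (0 < E) by (unfold E; nra).
   replace (200 * / D) with (50 / E + 50 * (4 * E - D) / (D * E)) by (field; lra).
   assert (0 <= 50 * (4 * E - D) / (D * E)).
   { unfold Rdiv. apply Rmult_le_pos. unfold D, E. nra. left. apply Rinv_0_lt_compat. nra. }
   lra.
 - exists (200 * 1). apply (is_series_scal_l 200 _ 1 is_series_tele).
Qed.

Lemma tri_aux a b : a <= Rabs b + Rabs (a - b).
Proof. pose proof (Rle_abs a). pose proof (Rabs_triang b (a - b)).
 replace (b + (a - b)) with a in H0 by ring. lra. Qed.

Lemma ex_pos y : Rabs y <= 2 -> ex_series (fun n => g (y + INR n)).
Proof. intros Hy. apply (@ex_series_le R_AbsRing R_CompleteNormedModule _ M); [|apply ex_series_M].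
 intros n. change (norm (g (y + INR n))) with (Rabs (g (y + INR n))).
 rewrite Rabs_pos_eq by apply g_nonneg. apply g_M.
 pose proof (tri_aux (INR n) (y + INR n)). replace (INR n - (y + INR n)) with (- y) in H by ring.
 rewrite Rabs_Ropp in H. lra.
Qed.

Lemma ex_neg y : Rabs y <= 2 -> ex_series (fun n => g (y - INR (S n))).
Proof. intros Hy. apply (@ex_series_le R_AbsRing R_CompleteNormedModule _ M); [|apply ex_series_M].
 intros n. change (norm (g (y - INR (S n)))) with (Rabs (g (y - INR (S n)))).
 rewrite Rabs_pos_eq by apply g_nonneg. apply g_M.
 pose proof (tri_aux (INR (S n)) (INR (S n) - y)). replace (INR (S n) - (INR (S n) - y)) with y in H by ring.
 rewrite Rabs_minus_sym in H. rewrite S_INR in H |- *. lra.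
Qed.


Lemma cont_loc (f h : R -> R) x d : 0 < d -> (forall y, Rabs (y - x) < d -> f y = h y) ->
  continuity_pt h x -> continuity_pt f x.
Proof. intros Hd Heq Hc. unfold continuity_pt, continue_in, limit1_in, limit_in in *.
 intros eps Heps. destruct (Hc eps Heps) as [alp [Ha Hb]]. exists (Rmin alp d). split.
 - apply Rmin_pos; lra.
 - intros y [Hy1 Hy2]. simpl in *. unfold R_dist in *.
   rewrite (Heq y), (Heq x). apply Hb. split; auto. pose proof (Rmin_l alp d). lra.
   rewrite Rminus_eq_0, Rabs_R0. lra. pose proof (Rmin_r alp d). lra.
Qed.

Lemma cont_affine a b x : continuity_pt (fun y => a * y + b) x.
Proof. apply (continuity_pt_plus (fun y => a * y) (fun _ => b)).
 apply (continuity_pt_mult (fun _ => a) (fun y => y)). apply continuity_pt_const. intros u v; reflexivity.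
 apply continuity_pt_id. apply continuity_pt_const. intros u v; reflexivity. Qed.

Lemma cont_sinc0 : continuity_pt sinc 0.
Proof. unfold continuity_pt, continue_in, limit1_in, limit_in.
 intros eps Heps. destruct (derivable_pt_lim_sin 0 eps Heps) as [del Hd]. exists del. split.
 apply cond_pos. intros y [[_ Hy1] Hy2]. simpl in *. unfold R_dist in *.
 rewrite sinc_0, sinc_nz by auto. specialize (Hd y (not_eq_sym Hy1)). rewrite Rminus_0_r in Hy2.
 specialize (Hd Hy2). rewrite Rplus_0_l, sin_0, cos_0, Rminus_0_r in Hd. exact Hd.
Qed.

Lemma cont_sinc t : continuity_pt sinc t.
Proof. destruct (Req_EM_T t 0) as [->|H].
 - apply cont_sinc0.
 - apply (cont_loc sinc (fun y => sin y / y) t (Rabs t)).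
   + apply Rabs_pos_lt; auto.
   + intros y Hy. apply sinc_nz. intro. subst. rewrite Rminus_0_l, Rabs_Ropp in Hy. lra.
   + apply (continuity_pt_div sin (fun y => y)). apply continuity_sin. apply continuity_pt_id. auto.
Qed.


Lemma cont_sinc_aff a b x : continuity_pt (fun y => sinc (PI * (a * y + b))) x.
Proof. replace (fun y : R => sinc (PI * (a * y + b))) with (comp sinc (fun y => (PI * a) * y + PI * b)).
 - apply continuity_pt_comp. apply cont_affine. apply cont_sinc.
 - apply functional_extensionality. intros y. unfold comp. f_equal. ring.
Qed.

Lemma cont_g_aff a b x : continuity_pt (fun y => g (a * y + b)) x.
Proof. unfold g. apply (continuity_pt_mult (fun y => sinc (PI * (a * y + b))) (fun y => sinc (PI * (a * y + b))));
 apply cont_sinc_aff. Qed.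

Lemma cont_series (fn : nat -> R -> R) :
  (forall n y, continuity_pt (fn n) y) ->
  (forall n y, Rabs y < 2 -> Rabs (fn n y) <= M n) ->
  forall x, Rabs x < 2 -> continuity_pt (fun y => Series (fun n => fn n y)) x.
Proof. intros Hc Hb x Hx.
 assert (H2 : 0 < 2) by lra. set (r := mkposreal 2 H2).
 assert (Hcv : Un_cv (fun n => sum_f_R0 (fun k => Rabs (M k)) n) (Series M)).
 { replace (fun k => Rabs (M k)) with M.
   2: { apply functional_extensionality. intros k. rewrite Rabs_pos_eq; auto. apply M_pos. }
   pose proof (Series_correct _ ex_series_M) as H. apply is_series_Reals in H. exact H. }
 assert (X : CVN_r fn r).
 { exists M. exists (Series M). split; auto. intros n y Hy. apply Hb. unfold Boule in Hy.
   simpl in Hy. rewrite Rminus_0_r in Hy. exact Hy. }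
 assert (Hx' : Rabs x < r) by (simpl; exact Hx).
 destruct (CVN_CVU_r fn r X x Hx') as [e He].
 apply (CVU_continuity (SP fn) (fun y => Series (fun n => fn n y)) x e He).
 - intros n y _. unfold SP. apply continuity_pt_finite_SF. intros; apply Hc.
 - unfold Boule. rewrite Rminus_eq_0, Rabs_R0. apply cond_pos.
Qed.

Definition G (x : R) : R := Series (fun n => g (x + INR n)) + Series (fun n => g (x - INR (S n))).

Lemma cont_g_shift c x : continuity_pt (fun y => g (y + c)) x.
Proof. replace (fun y => g (y + c)) with (fun y => g (1 * y + c)). apply cont_g_aff.
 apply functional_extensionality; intros; rewrite Rmult_1_l; auto. Qed.

Lemma cont_G x : Rabs x < 2 -> continuity_pt G x.
Proof. intros Hx. unfold G.
 apply (continuity_pt_plus (fun y => Series (fun n => g (y + INR n))) (fun y => Series (fun n => g (y - INR (S n))))).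
 - apply (cont_series (fun n y => g (y + INR n))); auto.
   + intros n y. apply cont_g_shift.
   + intros n y Hy. rewrite Rabs_pos_eq by apply g_nonneg. apply g_M.
     pose proof (tri_aux (INR n) (y + INR n)). replace (INR n - (y + INR n)) with (- y) in H by ring.
     rewrite Rabs_Ropp in H. lra.
 - apply (cont_series (fun n y => g (y - INR (S n)))); auto.
   + intros n y. apply (cont_g_shift (- INR (S n))).
   + intros n y Hy. rewrite Rabs_pos_eq by apply g_nonneg. apply g_M.
     pose proof (tri_aux (INR (S n)) (INR (S n) - y)). replace (INR (S n) - (INR (S n) - y)) with y in H by ring.
     rewrite Rabs_minus_sym in H. rewrite S_INR in H |- *. lra.
Qed.


Lemma Series_nonneg a : (forall n, 0 <= a n) -> ex_series a -> 0 <= Series a.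
Proof. intros H Hex. pose proof (Series_le (fun n => 0 * a n) a) as L.
 rewrite Series_scal_l, Rmult_0_l in L. apply L; auto. intros n. rewrite Rmult_0_l. split; [lra|auto]. Qed.

Lemma partial_le_Series a K : (forall n, 0 <= a n) -> ex_series a -> sum_f_R0 a K <= Series a.
Proof. intros H Hex. rewrite (Series_incr_n a (S K)) by (auto; lia). simpl pred.
 pose proof (Series_nonneg (fun k => a (S K + k)%nat)). 
 assert (0 <= Series (fun k => a (S K + k)%nat)). { apply H0. intros; apply H.
   apply (ex_series_incr_n a (S K)). auto. } lra. Qed.

Lemma sum_evenodd (v : nat -> R) K : sum_f_R0 v (2 * K + 1) = sum_f_R0 (fun k => v (2 * k)%nat) K + sum_f_R0 (fun k => v (2 * k + 1)%nat) K.
Proof. induction K.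
 - simpl. ring.
 - replace (2 * S K + 1)%nat with (S (S (2 * K + 1))) by lia. rewrite !tech5, IHK.
   replace (S (2 * K + 1)) with (2 * S K)%nat by lia. replace (S (2 * S K)) with (2 * S K + 1)%nat by lia. ring.
Qed.

Lemma phi_lim : filterlim (fun K => (2 * K + 1)%nat) eventually eventually.
Proof. intros P [N HN]. exists N. intros n Hn. apply HN. lia. Qed.

Lemma series_evenodd (v : nat -> R) : (forall n, 0 <= v n) ->
  ex_series (fun k => v (2 * k)%nat) -> ex_series (fun k => v (2 * k + 1)%nat) ->
  ex_series v /\ Series v = Series (fun k => v (2 * k)%nat) + Series (fun k => v (2 * k + 1)%nat).
Proof. intros Hp He Ho.
 set (Se := Series (fun k => v (2 * k)%nat)). set (So := Series (fun k => v (2 * k + 1)%nat)).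
 assert (Hsub : is_lim_seq (fun K => sum_f_R0 v (2 * K + 1)) (Se + So)).
 { apply (is_lim_seq_ext (fun K => sum_f_R0 (fun k => v (2 * k)%nat) K + sum_f_R0 (fun k => v (2 * k + 1)%nat) K)).
   intros; rewrite sum_evenodd; auto.
   apply is_lim_seq_plus'.
   - pose proof (Series_correct _ He) as H. apply is_series_Reals in H.
     apply is_lim_seq_Reals. exact H.
   - pose proof (Series_correct _ Ho) as H. apply is_series_Reals in H.
     apply is_lim_seq_Reals. exact H. }
 assert (Hinc : forall n, sum_f_R0 v n <= sum_f_R0 v (S n)) by (intros; rewrite tech5; specialize (Hp (S n)); lra).
 assert (Hmon : forall n m, (n <= m)%nat -> sum_f_R0 v n <= sum_f_R0 v m).
 { intros n m Hnm. induction Hnm. lra. specialize (Hinc m). lra. }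
 assert (Hbd : forall n, sum_f_R0 v n <= Se + So).
 { intros n. apply Rle_trans with (sum_f_R0 v (2 * n + 1)). apply Hmon. lia.
   rewrite sum_evenodd. apply Rplus_le_compat; apply partial_le_Series; auto. }
 destruct (ex_finite_lim_seq_incr (fun n => sum_f_R0 v n) (Se + So) Hinc Hbd) as [l Hl].
 pose proof (is_lim_seq_subseq _ _ _ phi_lim Hl) as Hl2. cbv beta in Hl2.
 apply is_lim_seq_unique in Hl2. apply is_lim_seq_unique in Hsub. rewrite Hsub in Hl2. injection Hl2 as Hl2.
 subst l.
 assert (Hs : is_series v (Se + So)).
 { apply is_series_Reals. apply is_lim_seq_Reals in Hl. exact Hl. }
 split. exists (Se + So). exact Hs. apply is_series_unique. exact Hs.
Qed.

Lemma cosg_p y k : cos (PI * (y + INR k)) * cos (PI * (y + INR k)) = cos (PI * y) * cos (PI * y).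
Proof. rewrite <- (cos_shift (PI * y) k). f_equal; f_equal; ring. Qed.
Lemma cosg_m y k : cos (PI * (y - INR k)) * cos (PI * (y - INR k)) = cos (PI * y) * cos (PI * y).
Proof. rewrite <- (cos_shift' (PI * y) k). f_equal; f_equal; ring. Qed.

Lemma INR2k k : INR (2 * k) = 2 * INR k.
Proof. rewrite mult_INR. reflexivity. Qed.
Lemma INR2k1 k : INR (2 * k + 1) = 2 * INR k + 1.
Proof. rewrite plus_INR, mult_INR. reflexivity. Qed.

Lemma G_dup x : Rabs x <= 1 ->
  G x = cos (PI * (x / 2)) * cos (PI * (x / 2)) * G (x / 2)
      + cos (PI * ((x + 1) / 2)) * cos (PI * ((x + 1) / 2)) * G ((x + 1) / 2).
Proof. intros Hx.
 set (c := cos (PI * (x / 2)) * cos (PI * (x / 2))).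
 set (s := cos (PI * ((x + 1) / 2)) * cos (PI * ((x + 1) / 2))).
 assert (H1 : Rabs (x / 2) <= 2). { unfold Rdiv. rewrite Rabs_mult, Rabs_inv, (Rabs_pos_eq 2) by lra. lra. }
 assert (H2 : Rabs ((x + 1) / 2) <= 2). { unfold Rdiv. rewrite Rabs_mult, Rabs_inv, (Rabs_pos_eq 2) by lra.
   pose proof (Rabs_triang x 1). rewrite Rabs_R1 in H. lra. }
 assert (Ev : forall k, g (x + INR (2 * k)) = c * g (x / 2 + INR k)).
 { intros k. rewrite INR2k. replace (x + 2 * INR k) with (2 * (x / 2 + INR k)) by field.
   rewrite g_double, cosg_p. reflexivity. }
 assert (Ov : forall k, g (x + INR (2 * k + 1)) = s * g ((x + 1) / 2 + INR k)).
 { intros k. rewrite INR2k1. replace (x + (2 * INR k + 1)) with (2 * ((x + 1) / 2 + INR k)) by field.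
   rewrite g_double, cosg_p. reflexivity. }
 assert (Ew : forall k, g (x - INR (S (2 * k))) = s * g ((x + 1) / 2 - INR (S k))).
 { intros k. rewrite S_INR, INR2k, S_INR. replace (x - (2 * INR k + 1)) with (2 * ((x + 1) / 2 - (INR k + 1))) by field.
   rewrite g_double. rewrite <- S_INR, cosg_m. reflexivity. }
 assert (Ow : forall k, g (x - INR (S (2 * k + 1))) = c * g (x / 2 - INR (S k))).
 { intros k. rewrite S_INR, INR2k1, S_INR. replace (x - (2 * INR k + 1 + 1)) with (2 * (x / 2 - (INR k + 1))) by field.
   rewrite g_double. rewrite <- S_INR, cosg_m. reflexivity. }
 destruct (series_evenodd (fun n => g (x + INR n))) as [_ Hv].
 { intros; apply g_nonneg. }
 { apply (ex_series_ext (fun k => c * g (x / 2 + INR k))). intros; rewrite Ev; auto.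
   apply (@ex_series_scal_l R_AbsRing R_NormedModule c). apply ex_pos; auto. }
 { apply (ex_series_ext (fun k => s * g ((x + 1) / 2 + INR k))). intros; rewrite Ov; auto.
   apply (@ex_series_scal_l R_AbsRing R_NormedModule s). apply ex_pos; auto. }
 destruct (series_evenodd (fun n => g (x - INR (S n)))) as [_ Hw].
 { intros; apply g_nonneg. }
 { apply (ex_series_ext (fun k => s * g ((x + 1) / 2 - INR (S k)))). intros; rewrite Ew; auto.
   apply (@ex_series_scal_l R_AbsRing R_NormedModule s). apply ex_neg; auto. }
 { apply (ex_series_ext (fun k => c * g (x / 2 - INR (S k)))). intros; rewrite Ow; auto.
   apply (@ex_series_scal_l R_AbsRing R_NormedModule c). apply ex_neg; auto. }
 unfold G at 1. rewrite Hv, Hw.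
 rewrite (Series_ext _ _ Ev), (Series_ext _ _ Ov), (Series_ext _ _ Ew), (Series_ext _ _ Ow).
 rewrite !Series_scal_l. unfold G. ring.
Qed.


Definition cc (x : R) := cos (PI * (x / 2)) * cos (PI * (x / 2)).
Definition ss (x : R) := cos (PI * ((x + 1) / 2)) * cos (PI * ((x + 1) / 2)).

Lemma cc_ss x : cc x + ss x = 1.
Proof. unfold cc, ss. pose proof (sin_cos (PI * (x / 2))). replace (PI * ((x + 1) / 2)) with (PI / 2 + PI * (x / 2)) by field.
 pose proof (sin2_cos2 (PI * (x / 2))). unfold Rsqr in H0. 
 assert (cos (PI / 2 + PI * (x / 2)) = - sin (PI * (x / 2))) by lra. rewrite H1. lra. Qed.

Lemma cc_pos x : 0 <= x < 1 -> 0 < cc x.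
Proof. intros Hx. unfold cc. assert (0 < cos (PI * (x / 2))). { pose proof PI_RGT_0. apply cos_gt_0; nra. } nra. Qed.

Lemma ss_nonneg x : 0 <= ss x.
Proof. unfold ss. nra. Qed.

Lemma herglotz (H : R -> R) :
  continuity_pt H 0 ->
  (forall x, 0 <= x <= 1 -> H x = cc x * H (x / 2) + ss x * H ((x + 1) / 2)) ->
  H 1 = H 0 ->
  forall x0, 0 <= x0 <= 1 -> (forall y, 0 <= y <= 1 -> H x0 <= H y) -> H x0 = H 0.
Proof. intros Hc Hd H10 x0 Hx0 Hmin.
 destruct (Req_EM_T x0 1) as [->|Hne]; [exact H10|].
 assert (Hlt : x0 < 1) by (destruct Hx0 as [_ [Hl|He]]; [exact Hl | exfalso; apply Hne; exact He]).
 assert (Step : forall x, 0 <= x < 1 -> H x0 = H x -> H (x / 2) = H x).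
 { intros x Hx Hex. pose proof (Hd x ltac:(lra)) as D. pose proof (cc_ss x). pose proof (cc_pos x Hx).
   pose proof (ss_nonneg x).
   assert (A : H x0 <= H (x / 2)) by (apply Hmin; lra).
   assert (B : H x0 <= H ((x + 1) / 2)) by (apply Hmin; lra).
   assert (ss x * H x0 <= ss x * H ((x + 1) / 2)) by (apply Rmult_le_compat_l; auto).
   assert (E : cc x * H (x / 2) <= cc x * H x) by (rewrite <- Hex in *; nra).
   apply Rmult_le_reg_l in E; auto. lra. }
 assert (Iter : forall k, H (x0 * (/ 2) ^ k) = H x0 /\ 0 <= x0 * (/ 2) ^ k <= x0).
 { induction k.
   - simpl. rewrite Rmult_1_r. lra.
   - destruct IHk as [IH1 IH2]. replace (x0 * (/ 2) ^ S k) with (x0 * (/ 2) ^ k / 2) by (simpl; field).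
     split. rewrite Step. exact IH1. lra. auto. lra. }
 destruct (Req_EM_T (H x0) (H 0)) as [Eq|Hneq]; [exact Eq|exfalso].
 assert (Heps : 0 < Rabs (H x0 - H 0)). { apply Rabs_pos_lt. intro. apply Hneq. lra. }
 destruct (Hc _ Heps) as [alp [Halp Hcont]].
 destruct (pow_lt_1_zero (/ 2) ltac:(rewrite Rabs_pos_eq; lra) (alp / 2) ltac:(lra)) as [N HN].
 specialize (HN N (le_n N)). destruct (Iter N) as [I1 I2]. rewrite Rabs_pos_eq in HN by (apply pow_le; lra).
 destruct (Req_EM_T (x0 * (/ 2) ^ N) 0) as [Z|Z].
 - rewrite Z in I1. apply Hneq. auto.
 - specialize (Hcont (x0 * (/ 2) ^ N)). simpl in Hcont. unfold R_dist in Hcont. rewrite I1 in Hcont.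
   assert (Rabs (H x0 - H 0) < Rabs (H x0 - H 0)). apply Hcont. split. split. exact I. auto.
   rewrite Rminus_0_r, Rabs_pos_eq by lra. apply Rle_lt_trans with ((/ 2) ^ N). 
   rewrite <- (Rmult_1_l ((/ 2) ^ N)) at 2. apply Rmult_le_compat_r. apply pow_le; lra. lra. lra. lra.
Qed.

Lemma Series_zero a : (forall n, a n = 0) -> Series a = 0.
Proof. intros H. rewrite (Series_ext a (fun n => 0 * a n)). rewrite Series_scal_l. ring.
 intros n. rewrite H. ring. Qed.

Lemma G_0 : G 0 = 1.
Proof. unfold G. rewrite Series_incr_1.
 - rewrite (Series_zero (fun k => g (0 + INR (S k)))), (Series_zero (fun n => g (0 - INR (S n)))).
   simpl. replace (0 + 0) with 0 by ring. rewrite g_0. ring.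
   + intros n. rewrite Rminus_0_l. apply g_mINR. lia.
   + intros n. rewrite Rplus_0_l. apply g_INR. lia.
 - apply ex_pos. rewrite Rabs_R0. lra.
Qed.

Lemma G_1 : G 1 = 1.
Proof. unfold G. rewrite (Series_incr_1 (fun n => g (1 - INR (S n)))).
 - rewrite (Series_zero (fun k => g (1 + INR k))), (Series_zero (fun k => g (1 - INR (S (S k))))).
   simpl. replace (1 - 1) with 0 by ring. rewrite g_0. ring.
   + intros n. replace (1 - INR (S (S n))) with (- INR (S n)) by (rewrite (S_INR (S n)); ring). apply g_mINR. lia.
   + intros n. replace (1 + INR n) with (INR (S n)) by (rewrite S_INR; ring). apply g_INR. lia.
 - apply ex_neg. rewrite Rabs_R1. lra.
Qed.

Lemma G_const x : 0 <= x <= 1 -> G x = 1.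
Proof. intros Hx.
 assert (Hc : forall c, 0 <= c <= 1 -> continuity_pt G c).
 { intros c Hc. apply cont_G. rewrite Rabs_pos_eq; lra. }
 assert (Hd : forall x, 0 <= x <= 1 -> G x = cc x * G (x / 2) + ss x * G ((x + 1) / 2)).
 { intros y Hy. apply G_dup. rewrite Rabs_pos_eq; lra. }
 assert (H10 : G 1 = G 0) by (rewrite G_0, G_1; auto).
 destruct (continuity_ab_min G 0 1 ltac:(lra) Hc) as [m [Hm1 Hm2]].
 destruct (continuity_ab_maj G 0 1 ltac:(lra) Hc) as [Mx [HM1 HM2]].
 pose proof (herglotz G (Hc 0 ltac:(lra)) Hd H10 m Hm2 Hm1) as E1.
 pose proof (herglotz (fun y => - G y)) as E2.
 assert (E3 : - G Mx = - G 0).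
 { apply (E2 (continuity_pt_opp G 0 (Hc 0 ltac:(lra)))).
   - intros y Hy. rewrite (Hd y Hy). ring.
   - rewrite H10; auto.
   - auto.
   - intros y Hy. specialize (HM1 y Hy). lra. }
 specialize (Hm1 x Hx). specialize (HM1 x Hx). rewrite G_0 in *. lra.
Qed.


Lemma ln_le' x y : 0 < x -> x <= y -> ln x <= ln y.
Proof. intros H1 [H2|H2]. left; apply ln_increasing; auto. subst; lra. Qed.
Lemma exp_le' x y : x <= y -> exp x <= exp y.
Proof. intros [H|H]. left; apply exp_increasing; auto. subst; lra. Qed.

Lemma rpow_0 y : rpow 0 y = 0.
Proof. unfold rpow. destruct (Req_EM_T 0 0); [auto|congruence]. Qed.
Lemma rpow_pos a y : 0 < a -> rpow a y = Rpower a y.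
Proof. intros H. unfold rpow. destruct (Req_EM_T a 0); [lra|auto]. Qed.

Lemma term_g r t : term r t = rpow (g t) r.
Proof. unfold term, g. set (s := sinc (PI * t)). destruct (Req_EM_T s 0) as [E|E].
 - rewrite E, Rabs_R0, Rmult_0_l, !rpow_0. auto.
 - assert (0 < Rabs s) by (apply Rabs_pos_lt; auto).
   rewrite !rpow_pos by (auto; nra). unfold Rpower. f_equal.
   replace (s * s) with (Rabs s * Rabs s) by (symmetry; apply sq_abs). rewrite ln_mult by auto. ring.
Qed.

Lemma rpow_nonneg a y : 0 <= rpow a y.
Proof. unfold rpow. destruct (Req_EM_T a 0). lra. unfold Rpower. left; apply exp_pos. Qed.

Lemma rpow_le_self a r : 0 <= a <= 1 -> 1 <= r -> rpow a r <= a.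
Proof. intros Ha Hr. destruct (Req_EM_T a 0) as [->|E]. rewrite rpow_0; lra.
 rewrite rpow_pos by lra. unfold Rpower. rewrite <- (exp_ln a) at 2 by lra.
 apply exp_le'. assert (ln a <= 0). { rewrite <- ln_1. apply ln_le'; lra. } nra. Qed.

Lemma Rpower_split b r : 0 < b -> Rpower b r = Rpower b (r - 1) * b.
Proof. intros H. rewrite <- (Rpower_1 b) at 3 by auto. rewrite <- Rpower_plus. f_equal. ring. Qed.

Lemma Rpower_pos b r : 0 < Rpower b r.
Proof. unfold Rpower. apply exp_pos. Qed.

Lemma tangent a b r : 0 <= a -> 0 < b -> 1 <= r ->
  Rpower b r + r * Rpower b (r - 1) * (a - b) <= rpow a r.
Proof. intros Ha Hb Hr.
 assert (Hd : forall c, 0 < c -> derivable_pt_lim (fun x => Rpower x r) c (r * Rpower c (r - 1))).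
 { intros c Hc. apply derivable_pt_lim_power. auto. }
 destruct (Req_EM_T a 0) as [->|E].
 - rewrite rpow_0. rewrite (Rpower_split b r Hb). pose proof (Rpower_pos b (r - 1)).
   assert (0 <= Rpower b (r - 1) * b) by (apply Rmult_le_pos; lra). nra.
 - rewrite rpow_pos by lra. destruct (Rtotal_order a b) as [Hlt|[Heq|Hgt]].
   + destruct (MVT_cor2 (fun x => Rpower x r) (fun c => r * Rpower c (r - 1)) a b Hlt) as [c [Hc1 Hc2]].
     { intros c Hc. apply Hd. lra. }
     assert (Rpower c (r - 1) <= Rpower b (r - 1)) by (apply Rle_Rpower_l; lra).
     assert (r * Rpower c (r-1) * (b-a) <= r*Rpower b (r-1)*(b-a)) by (apply Rmult_le_compat_r; [lra| apply Rmult_le_compat_l; lra]).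
     lra.
   + subst. lra.
   + destruct (MVT_cor2 (fun x => Rpower x r) (fun c => r * Rpower c (r - 1)) b a Hgt) as [c [Hc1 Hc2]].
     { intros c Hc. apply Hd. lra. }
     assert (Rpower b (r - 1) <= Rpower c (r - 1)) by (apply Rle_Rpower_l; lra).
     assert (r * Rpower b (r-1) * (a-b) <= r*Rpower c (r-1)*(a-b)) by (apply Rmult_le_compat_r; [lra| apply Rmult_le_compat_l; lra]).
     lra.
Qed.


Lemma poly_aux v : 0 <= v <= 2 -> 42/100 * v <= v - v^3/6 + v^5/120 - v^7/5040.
Proof. intros Hv. set (w := v * v). assert (Hw : 0 <= w <= 4) by (unfold w; nra).
 replace (v - v^3/6 + v^5/120 - v^7/5040) with (v * (1 - w/6 + w*w/120 - w*w*w/5040)) by (unfold w; field).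
 rewrite (Rmult_comm (42/100) v). apply Rmult_le_compat_l. lra.
 assert (w*w*w <= 64) by nra. nra.
Qed.

Lemma sin_lb42 v : 0 <= v <= 2 -> 42/100 * v <= sin v.
Proof. intros Hv. pose proof PI_gt3. assert (Hv0 : 0 <= v) by lra. assert (HvP : v <= PI) by lra. destruct (SIN v Hv0 HvP) as [HS _].
 unfold sin_lb in HS. rewrite sa3 in HS. pose proof (poly_aux v Hv). lra. Qed.

Lemma sinsq_lb u : Rabs u <= 1/2 -> 3/2 * (u * u) <= sin (PI * u) * sin (PI * u).
Proof. intros Hu. pose proof PI_gt3. pose proof PI_4.
 set (v := PI * Rabs u).
 assert (Hv : 0 <= v <= 2) by (unfold v; pose proof (Rabs_pos u); nra).
 assert (E : sin (PI * u) * sin (PI * u) = sin v * sin v).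
 { unfold v. destruct (Rle_lt_dec 0 u). rewrite Rabs_pos_eq by lra. auto.
   rewrite Rabs_left by lra. replace (PI * - u) with (- (PI * u)) by ring. rewrite sin_neg. ring. }
 rewrite E. pose proof (sin_lb42 v Hv).
 assert (u * u = Rabs u * Rabs u) by apply sq_abs.
 assert (v * v = PI * PI * (u * u)) by (unfold v; rewrite H2; ring).
 assert ((42/100*v)*(42/100*v) <= sin v * sin v) by (apply Rmult_le_compat; lra).
 assert (PI * PI >= 9) by nra. assert (0 <= u * u) by nra.
 assert (9 * (u*u) <= PI*PI*(u*u)) by nra. nra.
Qed.

Lemma alg S t u : 0 <= S <= 1 - 3/2 * (u * u) -> 3/2 <= t -> -1/2 <= u <= 1/2 ->
  S / ((t + u) * (t + u)) + S / ((t - u) * (t - u)) <= 2 / (t * t).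
Proof. intros HS Ht Hu.
 assert (A : 0 < (t + u) * (t + u)) by nra. assert (B : 0 < (t - u) * (t - u)) by nra.
 assert (C : 0 < t * t) by nra.
 replace (2 / (t * t)) with (S / ((t + u) * (t + u)) + S / ((t - u) * (t - u)) +
   (2 * ((t+u)*(t+u)) * ((t-u)*(t-u)) - S * (t*t) * ((t-u)*(t-u) + (t+u)*(t+u))) / ((t*t) * ((t+u)*(t+u)) * ((t-u)*(t-u))))
   by (field; lra).
 assert (0 <= 2 * ((t+u)*(t+u)) * ((t-u)*(t-u)) - S * (t*t) * ((t-u)*(t-u) + (t+u)*(t+u))).
 { assert (S * (t*t) * ((t-u)*(t-u) + (t+u)*(t+u)) <= (1 - 3/2*(u*u)) * (t*t) * ((t-u)*(t-u) + (t+u)*(t+u))).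
   { apply Rmult_le_compat_r. nra. apply Rmult_le_compat_r; lra. }
   assert (0 <= u*u*(3/2*(t*t)*(t*t) - 3*(t*t) + 3/2*(u*u)*(t*t) + u*u)).
   { apply Rmult_le_pos. nra. assert (t*t >= 9/4) by nra. nra. }
   nra. }
 assert (0 <= (2 * ((t+u)*(t+u)) * ((t-u)*(t-u)) - S * (t*t) * ((t-u)*(t-u) + (t+u)*(t+u))) / ((t*t) * ((t+u)*(t+u)) * ((t-u)*(t-u)))).
 { apply Rmult_le_pos. auto. left. apply Rinv_0_lt_compat. apply Rmult_lt_0_compat; [apply Rmult_lt_0_compat|]; auto. }
 lra.
Qed.

Lemma g_half n : g (1/2 + INR n) = 1 / (PI * PI * ((INR n + 1/2) * (INR n + 1/2))).
Proof. pose proof (pos_INR n). pose proof PI_gt3. rewrite g_nz by (intro; lra).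
 replace (PI * (1/2 + INR n)) with (PI/2 + INR n * PI) by field. rewrite sin_shift, sin_PI2. field. repeat split; intro; nra.
Qed.

Lemma pair_ineq x n : 0 <= x <= 1 -> (1 <= n)%nat ->
  g (x + INR n) + g (x - INR (S n)) <= 2 * g (1/2 + INR n).
Proof. intros Hx Hn. pose proof PI_gt3. assert (Hn' : 1 <= INR n) by (apply (le_INR 1); auto).
 rewrite g_half. rewrite S_INR.
 rewrite (g_nz (x + INR n)) by (intro; lra). rewrite (g_nz (x - (INR n + 1))) by (intro; lra).
 assert (E1 : sin (PI * (x + INR n)) * sin (PI * (x + INR n)) = sin (PI * x) * sin (PI * x)).
 { rewrite <- (sin_shift (PI * x) n). f_equal; f_equal; ring. }
 assert (E2 : sin (PI * (x - (INR n + 1))) * sin (PI * (x - (INR n + 1))) = sin (PI * x) * sin (PI * x)).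
 { rewrite <- (sin_shift' (PI * x) (S n)). rewrite S_INR. f_equal; f_equal; ring. }
 rewrite E1, E2.
 set (u := x - 1/2). set (t := INR n + 1/2).
 assert (HS : sin (PI * x) * sin (PI * x) = 1 - sin (PI * u) * sin (PI * u)).
 { replace (PI * x) with (PI / 2 + PI * u) by (unfold u; field). rewrite <- cos_sin.
   pose proof (sin2_cos2 (PI * u)). unfold Rsqr in H0. lra. }
 pose proof (sinsq_lb u ltac:(unfold u; apply Rabs_le; lra)).
 pose proof (alg (sin (PI * x) * sin (PI * x)) t u ltac:(split; [nra|lra]) ltac:(unfold t; lra) ltac:(unfold u; lra)) as A.
 set (S := sin (PI * x) * sin (PI * x)) in *.
 assert (Et : t + u = x + INR n) by (unfold t, u; field).
 assert (Eu : t - u = - (x - (INR n + 1))) by (unfold t, u; field).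
 assert (Htu : 0 < t + u) by lra. assert (Htu' : 0 < t - u) by lra.
 replace (S / (PI * (x + INR n) * (PI * (x + INR n))) + S / (PI * (x - (INR n + 1)) * (PI * (x - (INR n + 1)))))
   with ((S / ((t + u) * (t + u)) + S / ((t - u) * (t - u))) * / (PI * PI)).
 2: { rewrite Et, Eu. field. repeat split; intro; nra. }
 replace (2 * (1 / (PI * PI * (t * t)))) with (2 / (t * t) * / (PI * PI)).
 2: { field. repeat split; intro; nra. }
 apply Rmult_le_compat_r. left. apply Rinv_0_lt_compat. nra. exact A.
Qed.


Lemma exR_plus a b : ex_series a -> ex_series b -> ex_series (fun n => a n + b n).
Proof. intros. apply (@ex_series_plus R_AbsRing R_NormedModule); auto. Qed.
Lemma exR_scal c a : ex_series a -> ex_series (fun n => c * a n).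
Proof. intros. apply (@ex_series_scal_l R_AbsRing R_NormedModule c); auto. Qed.
Lemma exR_minus a b : ex_series a -> ex_series b -> ex_series (fun n => a n - b n).
Proof. intros. apply (@ex_series_minus R_AbsRing R_NormedModule); auto. Qed.

Lemma Series_le_gen u v : ex_series u -> ex_series v -> (forall n, u n <= v n) -> Series u <= Series v.
Proof. intros Hu Hv H. pose proof (Series_nonneg (fun n => v n - u n)) as N.
 rewrite Series_minus in N by auto. assert (0 <= Series v - Series u). apply N. intros n; specialize (H n); lra.
 apply exR_minus; auto. lra. Qed.

Lemma b_pos n : 0 < g (1/2 + INR n).
Proof. rewrite g_half. pose proof PI_gt3. pose proof (pos_INR n). apply Rdiv_lt_0_compat. lra.
 apply Rmult_lt_0_compat; nra. Qed.

Lemma b_le0 n : g (1/2 + INR n) <= g (1/2 + INR 0).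
Proof. rewrite !g_half. pose proof PI_gt3. pose proof (pos_INR n). simpl INR.
 unfold Rdiv. rewrite !Rmult_1_l. apply Rinv_le_contravar. nra.
 apply Rmult_le_compat_l. nra. nra. Qed.

Lemma ex_phi (h : nat -> R) r : 1 <= r -> (forall n, 0 <= h n <= 1) -> ex_series h -> ex_series (fun n => rpow (h n) r).
Proof. intros Hr Hh Hex. apply (@ex_series_le R_AbsRing R_CompleteNormedModule _ h); auto.
 intros n. change (norm (rpow (h n) r)) with (Rabs (rpow (h n) r)). rewrite Rabs_pos_eq by apply rpow_nonneg.
 apply rpow_le_self; auto. Qed.

Theorem proposition2 (r : R) (hr : 1 <= r) :
  forall x : R, 0 <= x <= 1 -> sinc_sum r (1 / 2) <= sinc_sum r x.
Proof. intros x Hx.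
 set (a := fun n => g (x + INR n)). set (a' := fun n => g (x - INR (S n))). set (b := fun n => g (1/2 + INR n)).
 assert (Rx : Rabs x <= 2) by (rewrite Rabs_pos_eq; lra).
 assert (Rh : Rabs (1/2) <= 2) by (rewrite Rabs_pos_eq; lra).
 assert (exA : ex_series a) by (apply ex_pos; auto).
 assert (exA' : ex_series a') by (apply ex_neg; auto).
 assert (exB : ex_series b) by (apply ex_pos; auto).
 assert (gr : forall t, 0 <= g t <= 1) by (intros; split; [apply g_nonneg|apply g_le1]).
 assert (exPA : ex_series (fun n => rpow (a n) r)) by (apply ex_phi; auto; intros; apply gr).
 assert (exPA' : ex_series (fun n => rpow (a' n) r)) by (apply ex_phi; auto; intros; apply gr).
 assert (exPB : ex_series (fun n => rpow (b n) r)) by (apply ex_phi; auto; intros; apply gr).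
 assert (Bm : forall n, g (1/2 - INR (S n)) = b n).
 { intros n. unfold b. rewrite <- g_opp. f_equal. rewrite S_INR. field. }
 assert (Gx : Series a + Series a' = 1) by (apply G_const; auto).
 assert (Gh : Series b + Series b = 1).
 { rewrite <- (G_const (1/2)) by lra. unfold G. f_equal. apply Series_ext. intros; rewrite Bm; auto. }
 assert (Sx : sinc_sum r x = Series (fun n => rpow (a n) r) + Series (fun n => rpow (a' n) r)).
 { unfold sinc_sum. f_equal; apply Series_ext; intros; apply term_g. }
 assert (Sh : sinc_sum r (1/2) = Series (fun n => rpow (b n) r) + Series (fun n => rpow (b n) r)).
 { unfold sinc_sum. f_equal; apply Series_ext; intros; rewrite term_g; auto. rewrite Bm. auto. }
 set (c := fun n => r * Rpower (b n) (r - 1)).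
 set (D := fun n => a n + a' n - 2 * b n).
 assert (Hdf : forall n, c 0%nat * D n <= rpow (a n) r + rpow (a' n) r - 2 * rpow (b n) r).
 { intros n. pose proof (b_pos n) as Hb. fold b in Hb.
   pose proof (tangent (a n) (b n) r ltac:(apply gr) Hb hr).
   pose proof (tangent (a' n) (b n) r ltac:(apply gr) Hb hr).
   rewrite (rpow_pos (b n)) by auto.
   assert (c 0%nat * D n <= c n * D n).
   { destruct n as [|m]. lra.
     assert (D (S m) <= 0). { unfold D, a, a', b. pose proof (pair_ineq x (S m) Hx ltac:(lia)). lra. }
     assert (c (S m) <= c 0%nat).
     { unfold c. apply Rmult_le_compat_l. lra. apply Rle_Rpower_l. lra. split. apply b_pos. apply b_le0. }
     nra. }
   unfold c, D in *. nra. }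
 assert (exD : ex_series D) by (apply exR_minus; [apply exR_plus|apply exR_scal]; auto).
 pose proof (Series_le_gen _ _ (exR_scal (c 0%nat) D exD)
   (exR_minus _ _ (exR_plus _ _ exPA exPA') (exR_scal 2 _ exPB)) Hdf) as L.
 rewrite Series_scal_l in L. rewrite Series_minus in L by (auto using exR_plus, exR_scal).
 rewrite Series_plus in L by auto. rewrite Series_scal_l in L.
 unfold D in L. rewrite Series_minus in L by (auto using exR_plus, exR_scal).
 rewrite Series_plus in L by auto. rewrite Series_scal_l in L.
 replace (Series a + Series a' - 2 * Series b) with 0 in L by lra.
 rewrite Sx, Sh. lra.
Qed.
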